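(* Let $\lambda\in\overline{\mathrm{Pr}}_k$ and $\mu\in W\cdot\lambda$. Then $\mu\in\overline{\mathrm{Pr}}_k$ if and only if $\mu$ is dominant.
   Context: Let $\mathfrak g=\mathfrak{sl}_{n+1}(\mathbb C)$, $n\ge1$, $\mathfrak h$ the traceless diagonal matrices, $\Delta_+=\{\varepsilon_i-\varepsilon_j:i<j\}$, $\Delta_-=-\Delta_+$, $\alpha_i=\varepsilon_i-\varepsilon_{i+1}$; $(\cdot,\cdot)$ the invariant form on $\mathfrak h^*$ with $(\alpha,\alpha)=2$ for roots, $\langle\mu,\alpha^\vee\rangle=(\mu,\alpha)$; $\omega_i$ fundamental weights, $P^\vee=\bigoplus\mathbb Z\omega_i$, $\rho=\sum\omega_i$; $W$ the Weyl group, $w\cdot\mu=w(\mu+\rho)-\rho$. A weight $\mu\in\mathfrak h^*$ is dominant if $\langle\mu+\rho,\alpha^\vee\rangle\notin\{-1,-2,-3,\dots\}$ for all $\alpha\in\Delta_+$. Fix $k\in\mathbb Q$ with $k+n+1=p/q$, $p,q\in\mathbb N$ coprime, $p\ge n+1$. $\overline{\mathrm{Pr}}_{k,\mathbb Z}=\{\sum\lambda_i\omega_i:\lambda_i\in\mathbb N_0,\sum\lambda_i\le p-n-1\}$. For $w\in W,\eta\in P^\vee$, $C(w,\eta)$ means: for all $\alpha\in\Delta_+$, $0\le(\eta,\alpha)\le q-1$ if $w(\alpha)\in\Delta_+$ and $1\le(\eta,\alpha)\le q$ if $w(\alpha)\in\Delta_-$. The admissible weights of level $k$: $\overline{\mathrm{Pr}}_k=\{w\cdot(\mu-\tfrac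 pq\eta):\mu\in\overline{\mathrm{Pr}}_{k,\mathbb Z},w\in W,\eta\in P^\vee,C(w,\eta)\}$. *)

(* Defs.v *)
From HB Require Import structures.
From mathcomp Require Import all_boot all_order all_algebra all_fingroup.
Set Implicit Arguments. Unset Strict Implicit. Unset Printing Implicit Defensive.
Import Order.TTheory GRing.Theory Num.Theory.
Local Open Scope ring_scope.

(* A weight mu = \sum_l mu_l omega_l of sl_{n+1}, stored by its coordinates
   mu_l = <mu, alpha_l^vee> in the basis of fundamental weights
   (index l : 'I_n stands for alpha_{l+1}). *)
Definition weight (n : nat) := {ffun 'I_n -> rat}.

(* epsilon-coordinates: mu = \sum_{i=0}^{n} x_i eps_i with x_i = \sum_{l>=i} mu_l
   (normalised so that x_n = 0). *)
Definition epsc (n : nat) (mu : weight n) (i : 'I_n.+1) : rat :=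
  \sum_(l < n | (i <= l)%N) mu l.

(* <mu, alpha^vee> for the positive root alpha = eps_i - eps_j, i < j. *)
Definition pairing (n : nat) (mu : weight n) (i j : 'I_n.+1) : rat :=
  epsc mu i - epsc mu j.

(* the two epsilon-indices l and l+1 of the simple root alpha_l *)
Definition lo (n : nat) (l : 'I_n) : 'I_n.+1 := widen_ord (leqnSn n) l.
Definition hi (n : nat) (l : 'I_n) : 'I_n.+1 := lift ord0 l.

(* Weyl group W = S_{n+1}, acting by w(eps_i) = eps_{w i}. *)
Definition wact (n : nat) (w : 'S_n.+1) (mu : weight n) : weight n :=
  [ffun l : 'I_n => epsc mu ((w^-1)%g (lo l)) - epsc mu ((w^-1)%g (hi l))].

Definition rho (n : nat) : weight n := [ffun _ => 1].

Definition wadd (n : nat) (a b : weight n) : weight n := [ffun l => a l + b l].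
Definition wsub (n : nat) (a b : weight n) : weight n := [ffun l => a l - b l].

Definition dot (n : nat) (w : 'S_n.+1) (mu : weight n) : weight n :=
  wsub (wact w (wadd mu (rho n))) (rho n).

Definition dominant (n : nat) (mu : weight n) : Prop :=
  forall i j : 'I_n.+1, (i < j)%N ->
    ~ (exists m : nat, pairing (wadd mu (rho n)) i j = - (m.+1)%:R).

Definition PrZ (n p : nat) (mu : weight n) : Prop :=
  (forall l, exists m : nat, mu l = m%:R) /\
  \sum_(l < n) mu l <= (p%:R - n%:R - 1 : rat).

(* coweight eta in P^vee = \oplus Z omega_i, viewed as a weight *)
Definition coweight (n : nat) := {ffun 'I_n -> int}.
Definition cw (n : nat) (eta : coweight n) : weight n := [ffun l => (eta l)%:~R].

(* condition C(w, eta); (eta, eps_i - eps_j) = pairing, w(alpha) > 0 iff w i < w j *)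
Definition condC (n q : nat) (w : 'S_n.+1) (eta : coweight n) : Prop :=
  forall i j : 'I_n.+1, (i < j)%N ->
    let v := pairing (cw eta) i j in
    if (w i < w j)%N then 0 <= v <= (q%:R - 1) else 1 <= v <= q%:R.

(* admissible weights of level k with k + n + 1 = p/q *)
Definition admissible (n p q : nat) (lam : weight n) : Prop :=
  exists (mu : weight n) (w : 'S_n.+1) (eta : coweight n),
    PrZ p mu /\ condC q w eta /\
    lam = dot w (wsub mu [ffun l => (p%:R / q%:R) * cw eta l]).
Arguments admissible : clear implicits.

(* Main.v *)
Require Import Defs.
From HB Require Import structures.
From mathcomp Require Import all_boot all_order all_algebra all_fingroup.
From mathcomp Require Import zify ring lra.
Set Implicit Arguments. Unset Strict Implicit. Unset Printing Implicit Defensive.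
Import Order.TTheory GRing.Theory Num.Theory.

Section H.
Local Open Scope ring_scope.

Lemma epsc_tele n (f : 'I_n.+1 -> rat) (i : 'I_n.+1) :
  \sum_(l < n | (i <= l)%N) (f (lo l) - f (hi l)) = f i - f ord_max.
Proof.
pose F k := f (inord k).
transitivity (\sum_(l < n | true && (i <= l)%N) (- (F l.+1 - F l))).
  apply: eq_bigr => l _; rewrite opprB /F; congr (f _ - f _); apply: val_inj => /=;
  rewrite inordK //; [apply: ltn_trans (ltn_ord l) _ | rewrite ltnS]; by [].
rewrite -(big_geq_mkord (nat_of_ord i) n xpredT (fun l => - (F l.+1 - F l))) sumrN telescope_sumr; last by rewrite -ltnS.
rewrite opprB /F; congr (f _ - f _); apply: val_inj => /=; rewrite inordK //.
Qed.

Lemma epsc_wact n (w : 'S_n.+1) (X : weight n) i :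
  epsc (wact w X) i = epsc X ((w^-1)%g i) - epsc X ((w^-1)%g ord_max).
Proof.
rewrite {1}/epsc.
under eq_bigr => l _ do rewrite ffunE.
exact: (epsc_tele (fun k => epsc X ((w^-1)%g k))).
Qed.

Lemma pairing_wact n (w : 'S_n.+1) (X : weight n) i j :
  pairing (wact w X) i j = pairing X ((w^-1)%g i) ((w^-1)%g j).
Proof. rewrite /pairing !epsc_wact; ring. Qed.

Lemma wact_comp n (w y : 'S_n.+1) (X : weight n) :
  wact w (wact y X) = wact (y * w)%g X.
Proof.
apply/ffunP => l; rewrite !ffunE !epsc_wact !invMg !permM; ring.
Qed.

Lemma wadd_wsub n (Z R : weight n) : wadd (wsub Z R) R = Z.
Proof. by apply/ffunP => l; rewrite !ffunE subrK. Qed.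

Lemma dot_comp n (w y : 'S_n.+1) (X : weight n) :
  dot w (dot y X) = dot (y * w)%g X.
Proof. by rewrite /dot wadd_wsub wact_comp. Qed.

Lemma pairing_dot n (w : 'S_n.+1) (X : weight n) i j :
  pairing (wadd (dot w X) (rho n)) i j =
  pairing (wadd X (rho n)) ((w^-1)%g i) ((w^-1)%g j).
Proof. by rewrite /dot wadd_wsub pairing_wact. Qed.

Lemma epsc_add n (a b : weight n) i : epsc (wadd a b) i = epsc a i + epsc b i.
Proof. by rewrite /epsc -big_split; apply: eq_bigr => l _; rewrite ffunE. Qed.
Lemma epsc_sub n (a b : weight n) i : epsc (wsub a b) i = epsc a i - epsc b i.
Proof. by rewrite /epsc -sumrB; apply: eq_bigr => l _; rewrite ffunE. Qed.
Lemma epsc_scale n (c : rat) (eta : coweight n) i :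
  epsc [ffun l => c * cw eta l] i = c * epsc (cw eta) i.
Proof. by rewrite /epsc mulr_sumr; apply: eq_bigr => l _; rewrite ffunE. Qed.

Lemma pairing_X n (nu : weight n) (c : rat) (eta : coweight n) i j :
  pairing (wadd (wsub nu [ffun l => c * cw eta l]) (rho n)) i j =
  pairing (wadd nu (rho n)) i j - c * pairing (cw eta) i j.
Proof. rewrite /pairing !epsc_add !epsc_sub !epsc_scale; ring. Qed.

Lemma pairing_anti n (X : weight n) i j : pairing X j i = - pairing X i j.
Proof. by rewrite /pairing opprB. Qed.

Lemma pairing_cw_int n (eta : coweight n) i j : exists z : int, pairing (cw eta) i j = z%:~R.
Proof.
exists ((\sum_(l < n | (i <= l)%N) eta l) - \sum_(l < n | (j <= l)%N) eta l)%R.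
rewrite /pairing /epsc rmorphB /= !rmorph_sum /=.
by congr (_ - _); apply: eq_bigr => l _; rewrite ffunE.
Qed.

Lemma to_int (p q : nat) (K M z : int) : (0 < q)%N ->
  (K%:~R - p%:R / q%:R * z%:~R = M%:~R :> rat) ->
  (K * q%:Z - p%:Z * z = M * q%:Z).
Proof.
move=> hq H.
have qne : (q%:R : rat) != 0 by rewrite pnatr_eq0 -lt0n.
have E : K%:~R * q%:R - p%:R * z%:~R = M%:~R * q%:R :> rat.
  by rewrite -H; timeout 20 field.
apply/eqP; rewrite -(eqr_int rat) !rmorphB !rmorphM /=; exact/eqP.
Qed.

Lemma gauss_nat (p q zn r : nat) : coprime p q -> (p * zn = q * r)%N -> exists t : nat, zn = (t * q)%N.
Proof.
move=> cpq E'.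
have : (q %| zn)%N.
  have cqp : coprime q p by rewrite coprime_sym.
  by rewrite -(Gauss_dvdr zn cqp) E' dvdn_mulr.
by case/dvdnP => t ->; exists t.
Qed.

Lemma case1 (p q k m : nat) (z : int) : (0 < q)%N -> coprime p q ->
  (k%:Z * q%:Z - p%:Z * z = (- (m.+1)%:Z) * q%:Z) -> 0 <= z -> z <= q%:Z - 1 -> False.
Proof.
move=> hq cpq.
case: z => [zn|zn] E z0 zq; last by [].
have E' : (p * zn = q * (k + m.+1))%N by timeout 20 lia.
have zq' : (zn < q)%N by timeout 20 lia.
have [t ht] := gauss_nat cpq E'.
clear E z0 zq; subst zn.
case: t E' zq' => [|t] E' zq'.
  by move: E' hq; rewrite mul0n muln0; clear; case: q => // q'; rewrite mulSn addnS.
by move: zq'; rewrite mulSn ltnNge leq_addr.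
Qed.

Lemma case2 (p q k m : nat) (z : int) : (0 < q)%N -> coprime p q -> (k < p)%N ->
  (k%:Z * q%:Z - p%:Z * z = (m.+1)%:Z * q%:Z) -> 1 <= z -> z <= q%:Z -> False.
Proof.
move=> hq cpq kp.
case: z => [zn|zn] E z0 zq; last by [].
have E' : (p * zn + q * m.+1 = q * k)%N by timeout 20 lia.
have zq' : (0 < zn <= q)%N by timeout 20 lia.
have E'' : (p * zn = q * (k - m.+1))%N.
  by rewrite mulnBr -E' addnK.
have [t ht] := gauss_nat cpq E''.
clear E z0 zq E''; subst zn.
case: t E' zq' => [|[|t]] E' zq'.
- by rewrite mul0n in zq'.
- rewrite mul1n in E'.
  have : (q * p <= q * k)%N by rewrite -E' mulnC leq_addr.
  by rewrite leq_pmul2l // leqNgt kp.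
- by move: zq' hq; rewrite !mulSn; timeout 20 lia.
Qed.

Lemma nu_pair n p (nu : weight n) (hp : (n.+1 <= p)%N) (H : PrZ p nu)
  (a b : 'I_n.+1) : (a < b)%N ->
  exists k : nat, pairing (wadd nu (rho n)) a b = k%:R /\ (0 < k)%N /\ (k < p)%N.
Proof.
case: H => Hint Hsum hab.
have Hint' l : exists m : nat, nu l == m%:R by case: (Hint l) => m' ->; exists m'.
pose m l := xchoose (Hint' l).
have hm l : nu l = (m l)%:R by exact/eqP/(xchooseP (Hint' l)).
exists (\sum_(l < n | (a <= l < b)%N) (m l).+1)%N.
split.
  rewrite /pairing /epsc (bigID (fun l : 'I_n => (l < b)%N)) /=.
  have -> : \sum_(i < n | (a <= i)%N && ~~ (i < b)%N) wadd nu (rho n) i =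
            \sum_(i < n | (b <= i)%N) wadd nu (rho n) i.
    apply: eq_bigl => l; rewrite -leqNgt; apply/andP/idP => [[]//|hl]; split=> //.
    exact: leq_trans (ltnW hab) hl.
  rewrite addrK natr_sum; apply: eq_bigr => l _.
  by rewrite !ffunE hm -addn1 natrD.
split.
  have ha : (a < n)%N by rewrite -ltnS; exact: leq_trans hab (ltn_ord b).
  rewrite (bigD1 (Ordinal ha)) //= ?leqnn //.
have Hs : (\sum_(l < n) m l + n < p)%N.
  have : (\sum_(l < n) nu l <= p%:R - n%:R - 1 :> rat) by [].
  rewrite (eq_bigr (fun l => (m l)%:R)) // -natr_sum.
  move=> h.
  have : ((\sum_(l < n) m l + n).+1%:R <= p%:R :> rat).
    rewrite -addn1 !natrD; lra.
  by rewrite ler_nat.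
apply: leq_ltn_trans Hs.
apply: (@leq_trans (\sum_(l < n) (m l).+1)).
  rewrite [X in (_ <= X)%N](bigID (fun l : 'I_n => (a <= l < b)%N)) /=; exact: leq_addr.
rewrite (eq_bigr (fun l => m l + 1)%N); last by move=> l _; rewrite addn1.
by rewrite big_split /= sum_nat_const card_ord muln1.
Qed.

Lemma mainAux (n p q : nat) (hn : (1 <= n)%N) (hq : (0 < q)%N)
  (hpq : coprime p q) (hp : (n.+1 <= p)%N)
  (lam : weight n) (hlam : admissible n p q lam)
  (w : 'S_n.+1) (mu : weight n) (hmu : mu = dot w lam) :
  admissible n p q mu <-> dominant mu.
Proof.
split.
- case=> nu [V [eta [HPr [HC ->]]]].
  move=> i j hij [m Hm].
  rewrite pairing_dot pairing_X in Hm.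
  set a := (V^-1)%g i in Hm; set b := (V^-1)%g j in Hm.
  have Va : V a = i by rewrite /a permKV.
  have Vb : V b = j by rewrite /b permKV.
  case: (ltngtP a b) => [hab|hab|e].
  + move: (HC a b hab); rewrite /= Va Vb hij => /andP [d0 dq].
    have [k [Hk [k0 kp]]] := nu_pair hp HPr hab.
    have [z Hz] := pairing_cw_int eta a b.
    rewrite Hk Hz in Hm d0 dq.
    rewrite ler0z in d0.
    have dq' : (z <= q%:Z - 1)%R.
      by rewrite -(ler_int rat) rmorphB /=.
    have E := @to_int p q k%:Z (- (m.+1)%:Z)%R z hq Hm.
    exact: (case1 hq hpq E d0 dq').
  + rewrite (pairing_anti _ b a) (pairing_anti (cw eta) b a) in Hm.
    have hji : (j < i)%N = false by apply/negbTE; rewrite -leqNgt ltnW.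
    move: (HC b a hab); rewrite /= Va Vb hji => /andP [d0 dq].
    have [k [Hk [k0 kp]]] := nu_pair hp HPr hab.
    have [z Hz] := pairing_cw_int eta b a.
    rewrite Hk Hz in Hm d0 dq.
    have d1 : (1 <= z)%R by rewrite -(ler_int rat).
    have dq' : (z <= q%:Z)%R by rewrite -(ler_int rat).
    have Hm' : k%:R - p%:R / q%:R * z%:~R = (m.+1)%:R :> rat.
      by apply: oppr_inj; rewrite -Hm; timeout 20 ring.
    have E := @to_int p q k%:Z (m.+1)%:Z z hq Hm'.
    exact: (case2 hq hpq kp E d1 dq').
  + have eab : a = b := val_inj e.
    have : i = j by rewrite -Va -Vb eab.
    by move=> eij; rewrite eij ltnn in hij.
- move=> hdom.
  case: hlam => nu [y [eta [HPr [HC Hlam]]]].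
  exists nu, (y * w)%g, eta; split; first done.
  split; last by rewrite hmu Hlam dot_comp.
  set V := (y * w)%g.
  have hmuV : mu = dot V (wsub nu [ffun l => p%:R / q%:R * cw eta l]).
    by rewrite hmu Hlam dot_comp.
  have hP : forall a b, pairing (wadd mu (rho n)) (V a) (V b) =
     pairing (wadd nu (rho n)) a b - p%:R / q%:R * pairing (cw eta) a b.
    by move=> a b; rewrite hmuV pairing_dot pairing_X !permK.
  move=> a b hab /=.
  have [k [Hk [k0 kp]]] := nu_pair hp HPr hab.
  have [z Hz] := pairing_cw_int eta a b.
  have hPab := hP a b; have hPba := hP b a.
  rewrite (pairing_anti _ a b) (pairing_anti (cw eta) a b) Hk Hz in hPba.
  rewrite Hk Hz in hPab.
  rewrite Hz.
  have qne : (q%:R : rat) != 0 by rewrite pnatr_eq0 -lt0n.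
  move: (HC a b hab); rewrite /= Hz.
  have hVab : V a != V b by rewrite (inj_eq (@perm_inj _ V)) -val_eqE /= neq_ltn hab.
  case: ifP => hy; case: ifP => hV //.
  + move=> /andP [d0 dq].
    rewrite ler0z in d0.
    have dq' : (z <= q%:Z - 1)%R by rewrite -(ler_int rat) rmorphB /=.
    have hVba : (V b < V a)%N by move: hVab hV; rewrite -val_eqE /=; timeout 20 lia.
    have zn0 : z != 0.
      apply/negP => /eqP z0; subst z.
      apply: (hdom _ _ hVba); exists k.-1.
      rewrite hPba prednK //; timeout 20 ring.
    have z1 : (1 <= z)%R by timeout 20 lia.
    apply/andP; split.
      by rewrite -[1%R]/((1%:Z)%:~R : rat) ler_int.
    by rewrite -[q%:R]/((q%:Z)%:~R) ler_int; timeout 20 lia.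
  + move=> /andP [d0 dq].
    have d1 : (1 <= z)%R by rewrite -(ler_int rat).
    have dq' : (z <= q%:Z)%R by rewrite -(ler_int rat).
    have zq : z != q%:Z.
      apply/negP => /eqP zq; subst z.
      apply: (hdom _ _ hV); exists (p - k).-1.
      rewrite hPab prednK ?subn_gt0 // natrB ?(ltnW kp) //.
      have -> : (q%:Z)%:~R = q%:R :> rat by [].
      by timeout 20 field.
    apply/andP; split.
      by rewrite ler0z; timeout 20 lia.
    have h : (z <= q%:Z - 1)%R by timeout 20 lia.
    by rewrite -[q%:R]/((q%:Z)%:~R : rat) -[1%R]/((1%:Z)%:~R : rat) -rmorphB ler_int.
Qed.

End H.

Unset Implicit Arguments.
Theorem mainTheorem6 (n p q : nat) (hn : (1 <= n)%N) (hq : (0 < q)%N)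
  (hpq : coprime p q) (hp : (n.+1 <= p)%N)
  (lam : weight n) (hlam : admissible n p q lam)
  (w : 'S_n.+1) (mu : weight n) (hmu : mu = dot w lam) :
  admissible n p q mu <-> dominant mu.
Proof. exact (@mainAux n p q hn hq hpq hp lam hlam w mu hmu). Qed.
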